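(* For every integral domain $D$ and semistar operation $\star$ on $D$, $$\widetilde{\star}\text{-}\dim_v(D)=\sup\{\dim(T)\mid T\text{ is a }(\star,d_T)\text{-linked overring of }D\}.$$
   Context: $D$ is an integral domain with quotient field $K$; $f(D)$ denotes nonzero finitely generated fractional ideals, $\overline{\mathcal F}(D)$ nonzero $D$-submodules of $K$. A semistar operation $\star$ on $D$ is a map $\overline{\mathcal F}(D)\to\overline{\mathcal F}(D)$ with $(xE)^\star=xE^\star$ ($0\neq x\in K$), $E\subseteq F\Rightarrow E^\star\subseteq F^\star$, $E\subseteq E^\star=(E^\star)^\star$. $E^{\star_f}:=\bigcup\{F^\star:F\in f(D),F\subseteq E\}$. A nonzero ideal $I$ is a quasi-$\star_f$-ideal if $I^{\star_f}\cap D=I$; $\operatorname{QMax}^{\star_f}(D)$ is the set of maximal proper quasi-$\star_f$-ideals. $E^{\widetilde\star}:=\bigcap\{ED_M:M\in\operatorname{QMax}^{\star_f}(D)\}$ ($=K$ if empty). A valuation overring $V$ of $D$ is a $\widetilde\star$-valuation overring if $F^{\widetilde\star}\subseteq FV$ for all $F\in f(D)$; $\widetilde\star$-$\dim_v(D):=\sup\{\dim V\}$ over $\widetilde\star$-valuation overrings. An overring $T$ of $D$ ($D\subseteq T\subseteq K$) is $(\star,d_T)$-linked to $D$ if for every nonzero finitely generated ideal $F$ of $D$ with $F^\star=D^\star$ one has $FT=T$. *)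

(* Defs.v *)
From HB Require Import structures.
From mathcomp Require Import all_boot all_order all_algebra.
Set Implicit Arguments. Unset Strict Implicit. Unset Printing Implicit Defensive.
Import Order.TTheory GRing.Theory Num.Theory.
Local Open Scope ring_scope.

Section Defs.
Variable K : fieldType.

Definition kset := K -> Prop.
Definition ksubset (A B : kset) := forall x, A x -> B x.
Definition kseteq (A B : kset) := forall x, A x <-> B x.
Definition kstrict_subset (A B : kset) := ksubset A B /\ exists x, B x /\ ~ A x.

Definition is_subring (D : kset) :=
  D 0 /\ D 1 /\ (forall x y, D x -> D y -> D (x - y)) /\
  (forall x y, D x -> D y -> D (x * y)).

Definition quotient_field_of (D : kset) :=
  forall x : K, exists a b, D a /\ D b /\ b != 0 /\ x = a / b.

Definition domain_with_qf (D : kset) := is_subring D /\ quotient_field_of D.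

Definition is_submodule (D E : kset) :=
  E 0 /\ (forall x y, E x -> E y -> E (x + y)) /\
  (forall d x, D d -> E x -> E (d * x)).
Definition knonzero (E : kset) := exists x, E x /\ x != 0.
Definition Fbar (D E : kset) := is_submodule D E /\ knonzero E.

Definition kscale (x : K) (E : kset) : kset := fun y => exists e, E e /\ y = x * e.

Fixpoint span (R : kset) (s : seq K) : kset :=
  match s with
  | [::] => fun y => y = 0
  | x :: s' => fun y => exists r z, R r /\ span R s' z /\ y = r * x + z
  end.

Definition fg_frac (D F : kset) := (exists s, kseteq F (span D s)) /\ knonzero F.

Definition semistar (D : kset) (star : kset -> kset) :=
  (forall E, Fbar D E -> Fbar D (star E)) /\
  (forall x E, x != 0 -> Fbar D E -> kseteq (star (kscale x E)) (kscale x (star E))) /\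
  (forall E F, Fbar D E -> Fbar D F -> ksubset E F -> ksubset (star E) (star F)) /\
  (forall E, Fbar D E -> ksubset E (star E)) /\
  (forall E, Fbar D E -> kseteq (star (star E)) (star E)).

Definition star_f (D : kset) (star : kset -> kset) (E : kset) : kset :=
  fun y => exists F, fg_frac D F /\ ksubset F E /\ star F y.

Definition nz_ideal (D I : kset) := Fbar D I /\ ksubset I D.
Definition quasi_ideal (D : kset) star (I : kset) :=
  nz_ideal D I /\ kseteq (fun x => star_f D star I x /\ D x) I.
Definition proper_in (D I : kset) := exists d, D d /\ ~ I d.

Definition QMax (D : kset) star (M : kset) :=
  quasi_ideal D star M /\ proper_in D M /\
  forall N, quasi_ideal D star N -> proper_in D N -> ksubset M N -> ksubset N M.

Definition localization (D M : kset) : kset :=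
  fun x => exists d s, D d /\ D s /\ ~ M s /\ x = d / s.

Definition ext (E T : kset) : kset :=
  fun x => exists l : seq (K * K),
    (forall p, p \in l -> E p.1 /\ T p.2) /\ x = \sum_(p <- l) p.1 * p.2.

Definition star_tilde (D : kset) star (E : kset) : kset :=
  fun x => forall M, QMax D star M -> ext E (localization D M) x.

Definition overring (D T : kset) := is_subring T /\ ksubset D T.
Definition valuation_overring (D V : kset) :=
  overring D V /\ forall x, x != 0 -> V x \/ V x^-1.
Definition tilde_valuation_overring (D : kset) star (V : kset) :=
  valuation_overring D V /\
  forall F, fg_frac D F -> ksubset (star_tilde D star F) (ext F V).

Definition linked (D : kset) star (T : kset) :=
  overring D T /\
  forall F, fg_frac D F -> ksubset F D -> kseteq (star F) (star D) ->
    kseteq (ext F T) T.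

Definition prime_ideal (T P : kset) :=
  ksubset P T /\ P 0 /\ (forall x y, P x -> P y -> P (x + y)) /\
  (forall t x, T t -> P x -> P (t * x)) /\ ~ P 1 /\
  (forall x y, T x -> T y -> P (x * y) -> P x \/ P y).

Definition dim_ge (T : kset) (n : nat) :=
  exists c : nat -> kset,
    (forall i, (i <= n)%N -> prime_ideal T (c i)) /\
    (forall i, (i < n)%N -> kstrict_subset (c i) (c i.+1)).

Definition tilde_dim_v_ge (D : kset) star (n : nat) :=
  exists V, tilde_valuation_overring D star V /\ dim_ge V n.

Definition linked_dim_sup_ge (D : kset) star (n : nat) :=
  exists T, linked D star T /\ dim_ge T n.

End Defs.

(* Main.v *)
Require Import Defs.
From HB Require Import structures.
From mathcomp Require Import all_boot all_order all_algebra.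
From Stdlib Require Import Classical ClassicalEpsilon FunctionalExtensionality PropExtensionality.
Set Implicit Arguments. Unset Strict Implicit. Unset Printing Implicit Defensive.
Import Order.TTheory GRing.Theory Num.Theory.

Lemma pext (X : Type) (A B : X -> Prop) : (forall x, A x <-> B x) -> A = B.
Proof. move=> H; apply: functional_extensionality => x; apply: propositional_extensionality; exact: H. Qed.

Section Zorn.
Variable X : Type.
Variable P : X -> Prop.
Variable le : X -> X -> Prop.
Hypothesis le_refl : forall x, le x x.
Hypothesis le_trans : forall x y z, le x y -> le y z -> le x z.
Definition is_chain (C : X -> Prop) := forall x y, C x -> C y -> le x y \/ le y x.
Hypothesis chains : forall C, (forall x, C x -> P x) -> is_chain C ->
  exists u, P u /\ forall x, C x -> le x u.

Definition sub (A B : X -> Prop) := forall x, A x -> B x.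
Definition sup_ub (C : X -> Prop) v := P v /\ forall c, C c -> le c v /\ ~ le v c.

Definition fstep (C : X -> Prop) : X -> Prop :=
  match excluded_middle_informative (exists v, sup_ub C v) with
  | left h => fun x => C x \/ x = proj1_sig (constructive_indefinite_description _ h)
  | right _ => C
  end.

Lemma fstep_sub C : sub C (fstep C).
Proof. rewrite /fstep; case: excluded_middle_informative => h x Hx //; by left. Qed.

Definition bigU (S : (X -> Prop) -> Prop) : X -> Prop := fun x => exists A, S A /\ A x.

Inductive tower : (X -> Prop) -> Prop :=
| tw_f A : tower A -> tower (fstep A)
| tw_u (S : (X -> Prop) -> Prop) : (forall A, S A -> tower A) -> tower (bigU S).

Definition extreme c := forall x, tower x -> sub x c -> x <> c -> sub (fstep x) c.

Lemma sub_trans A B C : sub A B -> sub B C -> sub A C.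
Proof. move=> h1 h2 x Hx; exact: h2 (h1 x Hx). Qed.

Lemma sub_antisym A B : sub A B -> sub B A -> A = B.
Proof. move=> h1 h2; apply: pext => x; split; [exact: h1|exact: h2]. Qed.

Lemma L1 c : extreme c -> forall x, tower x -> sub x c \/ sub (fstep c) x.
Proof.
move=> Ec x Tx; elim: Tx => [A TA IH | S HS IH].
- case: IH => [sAc|sfA].
  + case: (classic (A = c)) => [->|neq].
    * by right.
    * left; exact: Ec.
  + right; exact: (sub_trans sfA (@fstep_sub A)).
- case: (classic (forall A, S A -> sub A c)) => [h|h].
  + left => y [A [SA Ay]]; exact: h A SA y Ay.
  + right; move/not_all_ex_not: h => [A hA].
    have [SA nsub] : S A /\ ~ sub A c.
      by split; [apply: NNPP => nS; apply: hA => //| move=> h; apply: hA].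
    case: (IH A SA) => // sf y Hy; exists A; split => //; exact: sf.
Qed.

Lemma L2 c : tower c -> extreme c.
Proof.
elim => [A TA EA | S HS IH].
- move=> x Tx sx neq.
  case: (L1 EA Tx) => [sxA|sfx].
  + case: (classic (x = A)) => [->|nxA]; first by move=> y.
    apply: sub_trans (EA x Tx sxA nxA) (@fstep_sub A).
  + by case: neq; apply: sub_antisym.
- move=> x Tx sx neq.
  case: (classic (exists A, S A /\ sub x A)) => [[A [SA sxA]]|h].
  + case: (classic (x = A)) => [exA|nxA].
    * subst x.
      case: (classic (forall B, S B -> sub B A)) => [hB|hB].
        by case: neq; apply: sub_antisym => // y [B [SB By]]; exact: hB B SB y By.
      move/not_all_ex_not: hB => [B hB].
      have [SB nsub] : S B /\ ~ sub B A.
        by split; [apply: NNPP => nS; apply: hB => //| move=> h; apply: hB].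
      case: (L1 (IH A SA) (HS B SB)) => // sf y Hy; exists B; split => //; exact: sf.
    * move=> y Hy; exists A; split => //; exact: (IH A SA x Tx sxA nxA).
  + case: neq; apply: sub_antisym => // y [A [SA Ay]].
    case: (L1 (IH A SA) Tx) => [sxA|sfA].
      by case: h; exists A.
    by apply: sfA; apply: fstep_sub.
Qed.

Lemma tower_total A B : tower A -> tower B -> sub A B \/ sub B A.
Proof.
move=> TA TB; case: (L1 (L2 TB) TA) => [h|h]; first by left.
by right; apply: sub_trans (@fstep_sub B) h.
Qed.

Lemma tower_chain Z : tower Z -> is_chain Z /\ (forall x, Z x -> P x).
Proof.
elim => [C TC [IHc IHp] | S HS IH].
- rewrite /fstep; case: excluded_middle_informative => h //.
  case: (constructive_indefinite_description _ h) => v [Pv Hv] /=.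
  split.
  + move=> x y [Cx|->] [Cy|->].
    * exact: IHc.
    * by left; case: (Hv x Cx).
    * by right; case: (Hv y Cy).
    * by left.
  + by move=> x [Cx|->]; [exact: IHp|].
- split.
  + move=> x y [A0 [SA Ax]] [B [SB By]].
    case: (tower_total (HS A0 SA) (HS B SB)) => s.
    * exact: (proj1 (IH B SB)) x y (s x Ax) By.
    * exact: (proj1 (IH A0 SA)) x y Ax (s y By).
  + move=> x [A [SA Ax]]; exact: (proj2 (IH A SA)) x Ax.
Qed.

Theorem zorn : exists m, P m /\ forall y, P y -> le m y -> le y m.
Proof.
pose U := bigU tower.
have TU : tower U by apply: tw_u.
have fU : sub (fstep U) U by move=> x Hx; exists (fstep U); split => //; exact: tw_f.
have nosub : ~ exists v, sup_ub U v.
  move=> h; move: fU; rewrite /fstep; case: excluded_middle_informative => // h' fU.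
  case: (constructive_indefinite_description _ h') => v [Pv Hv] /= in fU.
  have Uv := fU v (or_intror erefl).
  by case: (Hv v Uv) => _; apply.
case: (tower_chain TU) => ch Pch.
case: (chains Pch ch) => u [Pu Hu].
exists u; split => // y Py luy.
apply: NNPP => nly; apply: nosub; exists y; split => // c Uc; split.
- exact: le_trans (Hu c Uc) luy.
- move=> lyc; apply: nly; exact: le_trans lyc (Hu c Uc).
Qed.
End Zorn.

Local Open Scope ring_scope.

Section Alg.
Variable K : fieldType.
Implicit Types (D R T V A Q I E F : kset K).

Lemma sr0 R : is_subring R -> R 0. Proof. by case. Qed.
Lemma sr1 R : is_subring R -> R 1. Proof. by case=> _ []. Qed.
Lemma srB R x y : is_subring R -> R x -> R y -> R (x - y).
Proof. by case=> _ [_ [h _]]; apply: h. Qed.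
Lemma srM R x y : is_subring R -> R x -> R y -> R (x * y).
Proof. by case=> _ [_ [_ h]]; apply: h. Qed.
Lemma srN R x : is_subring R -> R x -> R (- x).
Proof. move=> h hx; rewrite -sub0r; apply: srB => //; exact: sr0. Qed.
Lemma srD R x y : is_subring R -> R x -> R y -> R (x + y).
Proof. move=> h hx hy; rewrite -[y]opprK; apply: srB => //; exact: srN. Qed.
Lemma sr_sum R (I : eqType) (s : seq I) (f : I -> K) : is_subring R ->
  (forall i, i \in s -> R (f i)) -> R (\sum_(i <- s) f i).
Proof.
move=> h; elim: s => [|a s IH] H; first by rewrite big_nil; exact: sr0.
rewrite big_cons; apply: srD => //; first by apply: H; rewrite inE eqxx.
by apply: IH => i hi; apply: H; rewrite inE hi orbT.
Qed.

Lemma Fbar_D D : is_subring D -> Fbar D D.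
Proof.
move=> h; split; last by exists 1; split; [exact: sr1|exact: oner_neq0].
split; first exact: sr0.
split; [move=> x y; exact: srD | move=> d x; exact: srM].
Qed.

Lemma ext_single E T f t : E f -> T t -> ext E T (f * t).
Proof.
move=> hf ht; exists [:: (f, t)]; split; last by rewrite big_seq1.
by move=> p; rewrite inE => /eqP ->.
Qed.

Lemma ext_mono2 E T T' : ksubset T T' -> ksubset (ext E T) (ext E T').
Proof.
move=> h x [l [hl ->]]; exists l; split => // p hp.
by case: (hl p hp) => h1 h2; split => //; apply: h.
Qed.

Lemma ext_in E T V : is_subring V -> ksubset E V -> ksubset T V -> ksubset (ext E T) V.
Proof.
move=> hV hE hT x [l [hl ->]]; apply: sr_sum => // p hp.
case: (hl p hp) => h1 h2; apply: srM => //; [exact: hE|exact: hT].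
Qed.

Lemma ext_mulr E T x v : (forall t, T t -> T (t * v)) -> ext E T x -> ext E T (x * v).
Proof.
move=> hT [l [hl ->]]; exists [seq (p.1, p.2 * v) | p <- l]; split.
- move=> p /mapP [q hq ->] /=; case: (hl q hq) => h1 h2; split => //; exact: hT.
- rewrite big_map mulr_suml; apply: eq_bigr => p _ /=; by rewrite mulrA.
Qed.

Lemma tilde_linked D star V : domain_with_qf D -> semistar D star ->
  tilde_valuation_overring D star V -> linked D star V.
Proof.
move=> [hD qf] ss [[[hV sDV] vV] tl]; split; first by split.
move=> F fgF sFD eqF.
have ss' := ss; case: ss' => sFbar [sscale [smono [sext sidem]]].
have st1 : star D 1 by apply: sext; [exact: Fbar_D|exact: sr1].
have sF1 : star F 1 by apply/eqF.
have t1 : star_tilde D star F 1.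
  move=> M [[[FbM sMD] quasi] [[d [Dd nMd]] _]].
  have : exists f, F f /\ ~ M f.
    apply: NNPP => hne; apply: nMd.
    have M1 : M 1.
      apply/quasi; split; last exact: sr1.
      exists F; split => //; split => // y Fy; apply: NNPP => nMy; apply: hne; by exists y.
    rewrite -[d]mulr1; case: FbM => [[_ [_ hm]] _]; exact: hm.
  move=> [f [Ff nMf]].
  have fn0 : f != 0.
    apply/eqP => f0; apply: nMf; rewrite f0; by case: FbM => [[]].
  rewrite -(mulfV fn0); apply: ext_single => //.
  exists 1, f; split; first exact: sr1.
  split; first exact: sFD.
  by split => //; rewrite div1r.
have hFV := tl F fgF 1 t1.
move=> x; split.
- apply: ext_in => // y Fy; exact: sDV (sFD y Fy).
- move=> Vx; rewrite -[x]mul1r; apply: ext_mulr => // t Vt; exact: srM.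
Qed.
End Alg.

Local Open Scope ring_scope.

Definition ideal (K : fieldType) (R I : kset K) :=
  ksubset I R /\ I 0 /\ (forall x y, I x -> I y -> I (x + y)) /\
  (forall r x, R r -> I x -> I (r * x)).

Section Ideals.
Variable K : fieldType.
Implicit Types (R I M : kset K).

Lemma idl_sub R I x : ideal R I -> I x -> R x. Proof. by case=> h _; apply: h. Qed.
Lemma idl0 R I : ideal R I -> I 0. Proof. by case=> _ []. Qed.
Lemma idlD R I x y : ideal R I -> I x -> I y -> I (x + y).
Proof. by case=> _ [_ [h _]]; apply: h. Qed.
Lemma idlM R I r x : ideal R I -> R r -> I x -> I (r * x).
Proof. by case=> _ [_ [_ h]]; apply: h. Qed.
Lemma idlMr R I r x : ideal R I -> R r -> I x -> I (x * r).
Proof. by move=> h hr hx; rewrite mulrC; exact: (idlM h hr hx). Qed.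
Lemma idlN R I x : is_subring R -> ideal R I -> I x -> I (- x).
Proof. move=> hR h hx; rewrite -mulN1r; apply: (idlM h) => //; apply: srN => //; exact: sr1. Qed.
Lemma idlB R I x y : is_subring R -> ideal R I -> I x -> I y -> I (x - y).
Proof. move=> hR h hx hy; apply: (idlD h) => //; exact: (idlN hR h hy). Qed.
Lemma idl_sum R I (J : eqType) (s : seq J) (f : J -> K) : ideal R I ->
  (forall i, i \in s -> I (f i)) -> I (\sum_(i <- s) f i).
Proof.
move=> h; elim: s => [|a s IH] H; first by rewrite big_nil; exact: idl0 h.
rewrite big_cons; apply: (idlD h); first by apply: H; rewrite inE eqxx.
by apply: IH => i hi; apply: H; rewrite inE hi orbT.
Qed.

Lemma loc_sr R M : is_subring R -> M 0 -> ~ M 1 ->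
  (forall s s', R s -> R s' -> ~ M s -> ~ M s' -> ~ M (s * s')) ->
  is_subring (localization R M).
Proof.
move=> hR M0 M1 Mm.
have nz s : ~ M s -> s != 0 by move=> h; apply/eqP => e; apply: h; rewrite e.
split; first by exists 0, 1; do !split => //; [exact: sr0|exact: sr1|by rewrite mul0r].
split; first by exists 1, 1; do !split => //; [exact: sr1|exact: sr1|by rewrite divr1].
split.
- move=> x y [a [s [Ra [Rs [Ms ->]]]]] [b [t [Rb [Rt [Mt ->]]]]].
  exists (a * t - b * s), (s * t); do !split.
  + by apply: srB => //; apply: srM.
  + exact: srM.
  + exact: Mm.
  + by rewrite -mulNr addf_div ?nz // mulNr.
- move=> x y [a [s [Ra [Rs [Ms ->]]]]] [b [t [Rb [Rt [Mt ->]]]]].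
  exists (a * b), (s * t); do !split; [exact: srM|exact: srM|exact: Mm|exact: mulf_div].
Qed.

Definition locI R M I : kset K := fun x => exists c s, I c /\ R s /\ ~ M s /\ x = c / s.

Lemma locI_ideal R M I : is_subring R -> M 0 -> ~ M 1 ->
  (forall s s', R s -> R s' -> ~ M s -> ~ M s' -> ~ M (s * s')) ->
  ideal R I -> ideal (localization R M) (locI R M I).
Proof.
move=> hR M0 M1 Mm hI.
have nz s : ~ M s -> s != 0 by move=> h; apply/eqP => e; apply: h; rewrite e.
split; first by move=> x [c [s [Ic [Rs [Ms ->]]]]]; exists c, s; do !split => //; exact: idl_sub hI Ic.
split; first by exists 0, 1; do !split => //; [exact: idl0 hI|exact: sr1|by rewrite mul0r].
split.
- move=> x y [a [s [Ra [Rs [Ms ->]]]]] [b [t [Rb [Rt [Mt ->]]]]].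
  exists (a * t + b * s), (s * t); do !split.
  + by apply: (idlD hI); apply: (idlMr hI).
  + exact: srM.
  + exact: Mm.
  + by rewrite addf_div ?nz.
- move=> x y [a [s [Ra [Rs [Ms ->]]]]] [b [t [Rb [Rt [Mt ->]]]]].
  exists (a * b), (s * t); do !split; [exact: (idlM hI)|exact: srM|exact: Mm|exact: mulf_div].
Qed.

Lemma locI_proper R M I : M 0 -> ksubset I M -> ~ locI R M I 1.
Proof.
move=> M0 sIM [c [s [Ic [Rs [Ms e]]]]].
have s0 : s != 0 by apply/eqP => e0; apply: Ms; rewrite e0.
have : c = s by rewrite -(divfK s0 c) -e mul1r.
by move=> ecs; apply: Ms; rewrite -ecs; apply: sIM.
Qed.

Lemma loc_in R M x : is_subring R -> R x -> localization R M x \/ M 1.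
Proof.
move=> hR Rx; case: (classic (M 1)) => h; [by right|left].
by exists x, 1; do !split => //; [exact: sr1|by rewrite divr1].
Qed.

Lemma locI_in R M I x : is_subring R -> ~ M 1 -> I x -> locI R M I x.
Proof. by move=> hR M1 Ix; exists x, 1; do !split => //; [exact: sr1|by rewrite divr1]. Qed.

End Ideals.

Definition vring (K : fieldType) (V : kset K) :=
  is_subring V /\ forall x, x != 0 -> V x \/ V x^-1.
Definition mx (K : fieldType) (V : kset K) : kset K :=
  fun x => V x /\ (x != 0 -> ~ V x^-1).
Definition polyR (K : fieldType) (R : kset K) (p : {poly K}) := forall i, R p`_i.
Definition adj (K : fieldType) (R : kset K) (y : K) : kset K :=
  fun x => exists p, polyR R p /\ x = p.[y].

Section Poly.
Variable K : fieldType.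
Implicit Types (R I M : kset K).

Lemma prime_ideal_ideal R P : prime_ideal R P -> ideal R P.
Proof. by case=> h1 [h2 [h3 [h4 _]]]. Qed.

Lemma polyR_C R c : is_subring R -> R c -> polyR R c%:P.
Proof. by move=> hR hc i; rewrite coefC; case: eqP => _ //; exact: sr0. Qed.
Lemma polyR_X R : is_subring R -> polyR R 'X.
Proof. by move=> hR i; rewrite coefX; case: eqP => _; [exact: sr1|exact: sr0]. Qed.
Lemma polyR_B R p q : is_subring R -> polyR R p -> polyR R q -> polyR R (p - q).
Proof. by move=> hR hp hq i; rewrite coefB; apply: srB. Qed.
Lemma polyR_M R p q : is_subring R -> polyR R p -> polyR R q -> polyR R (p * q).
Proof. by move=> hR hp hq i; rewrite coefM; apply: sr_sum => // j _; apply: srM. Qed.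
Lemma polyI_B R I p q : is_subring R -> ideal R I -> polyR I p -> polyR I q -> polyR I (p - q).
Proof. by move=> hR hI hp hq i; rewrite coefB; apply: (idlB hR hI). Qed.
Lemma polyI_D R I p q : ideal R I -> polyR I p -> polyR I q -> polyR I (p + q).
Proof. by move=> hI hp hq i; rewrite coefD; apply: (idlD hI). Qed.
Lemma polyI_Mr R I p q : ideal R I -> polyR R p -> polyR I q -> polyR I (p * q).
Proof. by move=> hI hp hq i; rewrite coefM; apply: (idl_sum hI) => j _; apply: (idlM hI). Qed.
Lemma polyI_C R I c : ideal R I -> I c -> polyR I c%:P.
Proof. by move=> hI hc i; rewrite coefC; case: eqP => _ //; exact: idl0 hI. Qed.
Lemma polyI_R R I p : ideal R I -> polyR I p -> polyR R p.
Proof. by move=> hI hp i; apply: idl_sub hI (hp i). Qed.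

Lemma adj_sr R y : is_subring R -> is_subring (adj R y).
Proof.
move=> hR; split; first by exists 0; split; [exact: polyR_C (sr0 hR)|by rewrite horner0].
split; first by exists 1; split; [exact: polyR_C (sr1 hR)|by rewrite hornerC].
split.
- move=> x z [p [hp ->]] [q [hq ->]]; exists (p - q); split; [exact: polyR_B|by rewrite hornerD hornerN].
- move=> x z [p [hp ->]] [q [hq ->]]; exists (p * q); split; [exact: polyR_M|by rewrite hornerM].
Qed.

Lemma adj_ideal R I y : is_subring R -> ideal R I -> ideal (adj R y) (adj I y).
Proof.
move=> hR hI; split; first by move=> x [p [hp ->]]; exists p; split => //; exact: polyI_R hI hp.
split; first by exists 0; split; [exact: polyI_C hI (idl0 hI)|by rewrite horner0].
split.
- move=> x z [p [hp ->]] [q [hq ->]]; exists (p + q); split; [exact: polyI_D hI hp hq|by rewrite hornerD].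
- move=> x z [p [hp ->]] [q [hq ->]]; exists (p * q); split; [exact: polyI_Mr hI hp hq|by rewrite hornerM].
Qed.

Lemma adj_in R y x : is_subring R -> R x -> adj R y x.
Proof. by move=> hR hx; exists x%:P; split; [exact: polyR_C|by rewrite hornerC]. Qed.
Lemma adj_y R y : is_subring R -> adj R y y.
Proof. by move=> hR; exists 'X; split; [exact: polyR_X|by rewrite hornerX]. Qed.

Lemma rev_horner (q : {poly K}) (k : nat) (y : K) :
  y != 0 -> (size q <= k.+1)%N ->
  (\poly_(i < k.+1) q`_(k - i)).[y] = y ^+ k * q.[y^-1].
Proof.
move=> y0 sq; rewrite horner_poly (horner_coef_wide _ sq) mulr_sumr.
rewrite (reindex_inj rev_ord_inj) /=; apply: eq_bigr => i _.
have hi : (i <= k)%N by rewrite -ltnS.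
rewrite subSS subKn // exprVn mulrCA; congr (_ * _).
have -> : y ^+ k = y ^+ (k - i) * y ^+ i by rewrite -exprD subnK.
by rewrite mulfK // expf_neq0.
Qed.

Variables (B m : kset K).
Hypotheses (hB : is_subring B) (hm : ideal B m) (m1 : ~ m 1)
  (loc : forall b, B b -> ~ m b -> B b^-1).

Lemma reduce y p q : y != 0 -> polyR m p -> polyR m q -> p.[y] = 1 -> q.[y^-1] = 1 ->
  (size q <= size p)%N -> exists p', polyR m p' /\ p'.[y] = 1 /\ (size p' < size p)%N.
Proof.
move=> y0 hp hq py qy sqp.
have qn0 : (0 < size q)%N.
  rewrite size_poly_gt0; apply/eqP => q0; move: qy; rewrite q0 horner0 => /eqP.
  by rewrite eq_sym oner_eq0.
set k := (size q).-1; set n := (size p).-1.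
have hk : size q = k.+1 by rewrite /k prednK.
have hn : size p = n.+1 by rewrite /n prednK // (leq_trans qn0 sqp).
have kn : (k <= n)%N by rewrite -ltnS -hk -hn.
set c := q`_0 - 1.
have cm : ~ m c.
  move=> h; apply: m1; have -> : 1 = q`_0 - c by rewrite /c opprB addrCA subrr addr0.
  exact: (idlB hB hm).
have Bc : B c by apply: srB => //; [exact: idl_sub hm (hq 0%N)|exact: sr1].
have c0 : c != 0 by apply/eqP => e; apply: cm; rewrite e; exact: idl0 hm.
set r1 := \poly_(i < k.+1) q`_(k - i).
set r := r1 - 'X^k.
have ry : r.[y] = 0 by rewrite hornerD hornerN rev_horner ?hk // qy mulr1 hornerXn subrr.
have rB : polyR B r.
  apply: polyR_B => //; last by move=> i; rewrite coefXn; case: eqP => _; [exact: sr1|exact: sr0].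
  move=> i; rewrite coef_poly; case: ifP => _; last exact: sr0.
  exact: idl_sub hm (hq _).
have rk : r`_k = c by rewrite coefB coef_poly ltnSn subnn coefXn eqxx.
have rbig i : (k < i)%N -> r`_i = 0.
  move=> ki; rewrite coefB coef_poly coefXn ltnNge ki /=.
  by case: eqP => [e|_]; [move: ki; rewrite e ltnn|rewrite subr0].
set a := p`_n / c.
have am : m a by rewrite /a; apply: (idlMr hm) => //; exact: loc.
exists (p - a *: ('X^(n - k) * r)); split; [|split].
- apply: (polyI_B hB hm) => // i; rewrite coefZ coefXnM; case: ifP => _.
    by rewrite mulr0; exact: idl0 hm.
  by apply: (idlMr hm).
- by rewrite hornerD hornerN hornerZ hornerM ry !mulr0 subr0.
- rewrite hn ltnS; apply/leq_sizeP => j hj.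
  rewrite coefB coefZ coefXnM ltnNge (leq_trans (leq_subr _ _) hj) /=.
  move: hj; rewrite leq_eqVlt => /orP [/eqP <-|hj].
  + by rewrite subKn // rk /a divfK // subrr.
  + have -> : p`_j = 0 by move/leq_sizeP: (leqnn (size p)); apply; rewrite hn.
    rewrite rbig ?mulr0 ?subrr //.
    by rewrite ltn_subRL subnK.
Qed.

Lemma nopair N : forall y p q, y != 0 -> polyR m p -> polyR m q -> p.[y] = 1 -> q.[y^-1] = 1 ->
  (size p + size q <= N)%N -> False.
Proof.
elim: N => [|N IH] y p q y0 hp hq py qy hs.
- move: hs; rewrite leqn0 addn_eq0 => /andP [/eqP sp _].
  have : size p == 0%N by rewrite sp.
  rewrite size_poly_eq0 => /eqP p0; move: py; rewrite p0 horner0 => /eqP; by rewrite eq_sym oner_eq0.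
- case: (leqP (size q) (size p)) => h.
  + have [p' [hp' [py' sp']]] := reduce y0 hp hq py qy h.
    apply: (IH y p' q) => //; rewrite -ltnS (leq_trans _ hs) // ltn_add2r //.
  + have y0' : y^-1 != 0 by rewrite invr_eq0.
    have px : p.[y^-1^-1] = 1 by rewrite invrK.
    have [q' [hq' [qy' sq']]] := reduce y0' hq hp qy px (ltnW h).
    apply: (IH y p q') => //.
    by rewrite -ltnS (leq_trans _ hs) // ltn_add2l.
Qed.
End Poly.

Section Chev.
Variable K : fieldType.
Variables (A Q : kset K).
Hypotheses (hA : is_subring A) (hQ : prime_ideal A Q).

Let Q0 : Q 0. Proof. by case: hQ => _ []. Qed.
Let Q1 : ~ Q 1. Proof. by case: hQ => _ [_ [_ [_ []]]]. Qed.
Let Qm : forall s s', A s -> A s' -> ~ Q s -> ~ Q s' -> ~ Q (s * s').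
Proof. case: hQ => _ [_ [_ [_ [_ h]]]] s s' hs hs' ns ns' hq; by case: (h s s' hs hs' hq). Qed.
Let QI : ideal A Q. Proof. exact: prime_ideal_ideal. Qed.

Definition P0 (p : kset K * kset K) := is_subring p.1 /\ ksubset (localization A Q) p.1 /\
  ideal p.1 p.2 /\ ~ p.2 1 /\ ksubset Q p.2.
Definition le0 (p p' : kset K * kset K) := ksubset p.1 p'.1 /\ ksubset p.2 p'.2.

Lemma P0_base : P0 (localization A Q, locI A Q Q).
Proof.
split; first exact: loc_sr.
split; first by [].
split; first exact: locI_ideal.
split; first exact: locI_proper.
move=> x Qx; exact: locI_in.
Qed.

Lemma P0_chains C : (forall x, C x -> P0 x) -> is_chain le0 C ->
  exists u, P0 u /\ forall x, C x -> le0 x u.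
Proof.
move=> HP Hc; case: (classic (exists c0, C c0)) => [[c0 Cc0]|nC]; last first.
  by exists (localization A Q, locI A Q Q); split; [exact: P0_base|move=> x Cx; case: nC; exists x].
pose U1 : kset K := fun x => exists p, C p /\ p.1 x.
pose U2 : kset K := fun x => exists p, C p /\ p.2 x.
have two : forall p p', C p -> C p' -> exists p'', C p'' /\ le0 p p'' /\ le0 p' p''.
  move=> p p' Cp Cp'; case: (Hc p p' Cp Cp') => h.
  - exists p'; split => //; split => //; by split.
  - exists p; split => //; split => //; by split.
exists (U1, U2); split; last by move=> x Cx; split => z hz; exists x.
have [c0R [c0L [c0I [c01 c0Q]]]] := HP c0 Cc0.
split.
  split; first by exists c0; split => //; exact: sr0.
  split; first by exists c0; split => //; exact: sr1.
  split.
  - move=> x y [p [Cp px]] [p' [Cp' py]]; case: (two p p' Cp Cp') => q [Cq [[l1 _] [l2 _]]].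
    exists q; split => //; apply: srB; [exact: (proj1 (HP q Cq))|exact: l1|exact: l2].
  - move=> x y [p [Cp px]] [p' [Cp' py]]; case: (two p p' Cp Cp') => q [Cq [[l1 _] [l2 _]]].
    exists q; split => //; apply: srM; [exact: (proj1 (HP q Cq))|exact: l1|exact: l2].
split; first by move=> x hx; exists c0; split => //; exact: c0L.
split.
  split; first by move=> x [p [Cp px]]; exists p; split => //; case: (HP p Cp) => _ [_ [hI _]]; exact: idl_sub hI px.
  split; first by exists c0; split => //; exact: idl0 c0I.
  split.
  - move=> x y [p [Cp px]] [p' [Cp' py]]; case: (two p p' Cp Cp') => q [Cq [[_ l1] [_ l2]]].
    exists q; split => //; case: (HP q Cq) => _ [_ [hI _]]; apply: (idlD hI); [exact: l1|exact: l2].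
  - move=> x y [p [Cp px]] [p' [Cp' py]]; case: (two p p' Cp Cp') => q [Cq [[l1 _] [_ l2]]].
    exists q; split => //; case: (HP q Cq) => _ [_ [hI _]]; apply: (idlM hI); [exact: l1|exact: l2].
split; first by move=> [p [Cp p1]]; case: (HP p Cp) => _ [_ [_ [h _]]].
by move=> x Qx; exists c0; split => //; exact: c0Q.
Qed.

Section Max.
Variables (B m : kset K).
Hypotheses (hP : P0 (B, m)) (hmax : forall y, P0 y -> le0 (B, m) y -> le0 y (B, m)).
Let hB : is_subring B. Proof. by case: hP. Qed.
Let hL : ksubset (localization A Q) B. Proof. by case: hP => _ []. Qed.
Let hm : ideal B m. Proof. by case: hP => _ [_ []]. Qed.
Let m1 : ~ m 1. Proof. by case: hP => _ [_ [_ []]]. Qed.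
Let hQm : ksubset Q m. Proof. by case: hP => _ [_ [_ []]]. Qed.
Let m0 : m 0. Proof. exact: idl0 hm. Qed.

Lemma M1 x : B x -> ~ m x -> exists b c, B b /\ m c /\ 1 = c + x * b.
Proof.
move=> Bx mx0.
pose m' : kset K := fun z => exists b c, B b /\ m c /\ z = c + x * b.
have mm' : ksubset m m' by move=> z mz; exists 0, z; do !split => //; [exact: sr0|by rewrite mulr0 addr0].
have im' : ideal B m'.
  split; first by move=> z [b [c [Bb [mc ->]]]]; apply: srD => //; [exact: idl_sub hm mc|exact: srM].
  split; first exact: mm'.
  split.
  - move=> z w [b [c [Bb [mc ->]]]] [b' [c' [Bb' [mc' ->]]]]; exists (b + b'), (c + c').
    by do !split; [exact: srD|exact: (idlD hm)|rewrite mulrDr addrACA].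
  - move=> r z Br [b [c [Bb [mc ->]]]]; exists (r * b), (r * c).
    by do !split; [exact: srM|exact: (idlM hm)|rewrite mulrDr mulrCA].
case: (classic (m' 1)) => [[b [c [Bb [mc e]]]]|n1]; first by exists b, c.
have P' : P0 (B, m') by split => //; split => //; split => //; split => // z Qz; apply: mm'; exact: hQm.
have [_ /= h] := hmax P' (conj (fun z (hz : B z) => hz) mm').
case: mx0; apply: h; exists 1, 0; do !split => //; [exact: sr1|by rewrite mulr1 add0r].
Qed.

Lemma M2 s s' : B s -> B s' -> ~ m s -> ~ m s' -> ~ m (s * s').
Proof.
move=> Bs Bs' ms ms' h.
have [b [c [Bb [mc e]]]] := M1 Bs ms.
have [b' [c' [Bb' [mc' e']]]] := M1 Bs' ms'.
apply: m1.
have -> : 1 = c * (c' + s' * b') + (s * b) * c' + (s * s') * (b * b').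
  by rewrite -[LHS]mul1r {1}e {1}e' mulrDl [X in _ + X]mulrDr mulrACA addrA.
apply: (idlD hm); first apply: (idlD hm).
- apply: (idlMr hm) => //; apply: srD => //; [exact: idl_sub hm mc'|exact: srM].
- by apply: (idlM hm) => //; apply: srM.
- by apply: (idlMr hm) => //; apply: srM.
Qed.

Lemma M3 b : B b -> ~ m b -> B b^-1.
Proof.
move=> Bb mb.
have P' : P0 (localization B m, locI B m m).
  split; first by apply: loc_sr => // s s' hs hs' ns ns'; exact: M2.
  split; first by move=> z hz; case: (loc_in m hB (hL hz)).
  split; first by apply: locI_ideal => // s s' hs hs' ns ns'; exact: M2.
  split; first exact: locI_proper.
  by move=> z Qz; apply: locI_in => //; exact: hQm.
have le : le0 (B, m) (localization B m, locI B m m).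
  split => z hz /=; [by case: (loc_in m hB hz)|exact: locI_in].
have [/= h _] := hmax P' le.
apply: h; exists 1, b; do !split => //; [exact: sr1|by rewrite div1r].
Qed.

Lemma adjI_in y x : m x -> adj m y x.
Proof. by move=> hx; exists x%:P; split; [exact: polyI_C hm hx|by rewrite hornerC]. Qed.

Lemma Madj y : ~ B y -> exists p, polyR m p /\ p.[y] = 1.
Proof.
move=> By; case: (classic (adj m y 1)) => [[p [hp e]]|n1]; first by exists p.
have P' : P0 (adj B y, adj m y).
  split; first exact: adj_sr.
  split; first by move=> z hz; apply: adj_in => //; exact: hL.
  split; first exact: adj_ideal.
  split => // z Qz; apply: adjI_in; exact: hQm.
have le : le0 (B, m) (adj B y, adj m y) by split => z hz /=; [exact: adj_in|exact: adjI_in].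
have [/= h _] := hmax P' le.
by case: By; apply: h; exact: adj_y.
Qed.

Lemma M4 x : x != 0 -> B x \/ B x^-1.
Proof.
move=> x0; apply: NNPP => h.
have nx : ~ B x by move=> hx; apply: h; left.
have nx' : ~ B x^-1 by move=> hx; apply: h; right.
have [p [hp py]] := Madj nx.
have [q [hq qy]] := Madj nx'.
exact: (nopair hB hm m1 M3 x0 hp hq py qy (leqnn (size p + size q))).
Qed.

Lemma M5 x : A x -> (mx B x <-> Q x).
Proof.
move=> Ax; split.
- move=> [Bx hx]; apply: NNPP => nQ.
  have x0 : x != 0 by apply/eqP => e; apply: nQ; rewrite e.
  apply: (hx x0); apply: hL; exists 1, x; do !split => //; [exact: sr1|by rewrite div1r].
- move=> Qx; have mxx := hQm Qx; split; first exact: idl_sub hm mxx.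
  move=> x0 Bi; apply: m1; rewrite -(mulVf x0); exact: (idlM hm).
Qed.
End Max.

Lemma chevalley : exists W, vring W /\ ksubset A W /\ (forall x, A x -> (mx W x <-> Q x)).
Proof.
have refl : forall p, le0 p p by move=> p; split.
have trans : forall p q r, le0 p q -> le0 q r -> le0 p r.
  by move=> p q r [h1 h2] [h3 h4]; split => z hz; [apply: h3; apply: h1|apply: h4; apply: h2].
have [[B m] [hP hmax]] := zorn refl trans P0_chains.
exists B; split; first by split; [case: hP|exact: (M4 hP hmax)].
split; last exact: (M5 hP).
move=> a Aa; case: hP => _ [hL _]; apply: hL; exists a, 1; do !split => //; [exact: sr1|by rewrite divr1].
Qed.
End Chev.

Local Open Scope ring_scope.

Section Span.
Variable K : fieldType.
Variable D : kset K.
Hypothesis hD : is_subring D.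

Lemma span_sm s : is_submodule D (Defs.span D s).
Proof.
elim: s => [|x s [h0 [hadd hmul]]] /=.
- split => //; split; [by move=> x y -> ->; rewrite addr0|by move=> d x _ ->; rewrite mulr0].
- split; first by exists 0, 0; do !split => //; [exact: sr0|by rewrite mul0r addr0].
  split.
  + move=> y z [r [w [Dr [sw ->]]]] [r' [w' [Dr' [sw' ->]]]]; exists (r + r'), (w + w').
    by do !split; [exact: srD|exact: hadd|rewrite mulrDl addrACA].
  + move=> d y Dd [r [w [Dr [sw ->]]]]; exists (d * r), (d * w).
    by do !split; [exact: srM|exact: hmul|rewrite mulrDr mulrA].
Qed.

Lemma span_mem s x : x \in s -> Defs.span D s x.
Proof.
elim: s => [|y s IH] //=; rewrite inE => /orP [/eqP ->|h].
- exists 1, 0; do !split; [exact: sr1|exact: (proj1 (span_sm s))|by rewrite mul1r addr0].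
- exists 0, x; do !split; [exact: sr0|exact: IH|by rewrite mul0r add0r].
Qed.

Lemma span_sub s E : is_submodule D E -> (forall x, x \in s -> E x) -> ksubset (Defs.span D s) E.
Proof.
move=> [E0 [Eadd Emul]]; elim: s => [|y s IH] H z /=; first by move->.
move=> [r [w [Dr [sw ->]]]]; apply: Eadd; first by apply: Emul => //; apply: H; rewrite inE eqxx.
by apply: IH => // x hx; apply: H; rewrite inE hx orbT.
Qed.

Lemma fg_span F : fg_frac D F -> exists s, F = Defs.span D s /\ knonzero (Defs.span D s).
Proof.
move=> [[s hs] nz]; exists s; have e : F = Defs.span D s by apply: pext.
by split => //; rewrite -e.
Qed.

Lemma fg_Fbar F : fg_frac D F -> Fbar D F.
Proof. by move=> /fg_span [s [-> nz]]; split => //; exact: span_sm. Qed.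

Lemma span_fg s : knonzero (Defs.span D s) -> fg_frac D (Defs.span D s).
Proof. by move=> h; split => //; exists s. Qed.

Lemma sm_sum E (J : eqType) (l : seq J) (f : J -> K) : is_submodule D E ->
  (forall i, i \in l -> E (f i)) -> E (\sum_(i <- l) f i).
Proof.
move=> [E0 [Eadd _]]; elim: l => [|a l IH] H; first by rewrite big_nil.
rewrite big_cons; apply: Eadd; first by apply: H; rewrite inE eqxx.
by apply: IH => i hi; apply: H; rewrite inE hi orbT.
Qed.
End Span.

Section Star.
Variable K : fieldType.
Variables (D : kset K) (star : kset K -> kset K).
Hypotheses (hD : is_subring D) (ss : semistar D star).

Lemma st_Fbar E : Fbar D E -> Fbar D (star E). Proof. by case: ss => h _; apply: h. Qed.
Lemma st_mono E F : Fbar D E -> Fbar D F -> ksubset E F -> ksubset (star E) (star F).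
Proof. by case: ss => _ [_ [h _]]; apply: h. Qed.
Lemma st_ext E : Fbar D E -> ksubset E (star E). Proof. by case: ss => _ [_ [_ [h _]]]; apply: h. Qed.
Lemma st_idem E x : Fbar D E -> star (star E) x -> star E x.
Proof. by case: ss => _ [_ [_ [_ h]]] hE hx; exact: (proj1 (h E hE x) hx). Qed.

Lemma star_eqD G : Fbar D G -> ksubset G D -> star G 1 -> kseteq (star G) (star D).
Proof.
move=> hG sGD s1 x; split; first exact: st_mono hG (Fbar_D hD) sGD x.
have hsG := st_Fbar hG.
have sDG : ksubset D (star G).
  by move=> d Dd; rewrite -[d]mulr1; case: hsG => [[_ [_ h]] _]; apply: h.
move=> h; apply: st_idem => //; exact: st_mono (Fbar_D hD) hsG sDG x h.
Qed.
End Star.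

Section Val.
Variable K : fieldType.
Implicit Types (V W : kset K).

Lemma mx_notin V x : V x -> ~ mx V x -> x != 0 /\ V x^-1.
Proof.
move=> Vx h; split.
- by apply/eqP => e; apply: h; split => // /eqP.
- apply: NNPP => nV; apply: h; split => //.
Qed.

Lemma mx_ideal V : vring V -> ideal V (mx V).
Proof.
move=> [hV hv]; split; first by move=> x [].
split; first by split; [exact: sr0|move/eqP].
split.
- move=> x y [Vx hx] [Vy hy]; split; first exact: srD.
  move=> s0 Vs.
  have [x0|x0] := eqVneq x 0; first by move: s0 Vs; rewrite x0 add0r; exact: hy.
  have [y0|y0] := eqVneq y 0; first by move: s0 Vs; rewrite y0 addr0; exact: hx.
  have sn : x + y != 0 := s0.
  case: (hv (x / y)) => [|h|h]; first by rewrite mulf_neq0 // invr_eq0.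
  + apply: (hy y0); have -> : y^-1 = (x / y + 1) * (x + y)^-1.
      by rewrite -[1](mulfV y0) -mulrDl mulrAC divff // div1r.
    apply: srM => //; apply: srD => //; exact: sr1.
  + have h' : V (y / x) by rewrite invf_div in h.
    apply: (hx x0); have -> : x^-1 = (y / x + 1) * (x + y)^-1.
      by rewrite -[1](mulfV x0) -mulrDl addrC mulrAC divff // div1r.
    apply: srM => //; apply: srD => //; exact: sr1.
- move=> r x Vr [Vx hx]; split; first exact: srM.
  move=> rx0 Vi.
  have r0 : r != 0 by apply: contraNneq rx0 => ->; rewrite mul0r.
  have x0 : x != 0 by apply: contraNneq rx0 => ->; rewrite mulr0.
  apply: (hx x0); have -> : x^-1 = r * (r * x)^-1 by rewrite invfM mulVKf.
  exact: srM.
Qed.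

Lemma mx_sub V W : vring V -> ksubset V W -> ksubset (mx W) (mx V).
Proof.
move=> [hV hv] sVW x [Wx hx].
have Vx : V x.
  apply: NNPP => nV.
  have x0 : x != 0 by apply/eqP => e; apply: nV; rewrite e; exact: sr0.
  case: (hv x x0) => // Vi; exact: (hx x0) (sVW _ Vi).
split => // x0 Vi; exact: (hx x0) (sVW _ Vi).
Qed.

Lemma mx_prime V W : vring V -> vring W -> ksubset V W -> prime_ideal V (mx W).
Proof.
move=> hV hW sVW; have hI := mx_ideal hW.
split; first by move=> x hx; case: (mx_sub hV sVW hx).
split; first exact: idl0 hI.
split; first by move=> x y; exact: idlD hI.
split; first by move=> t x Vt; apply: (idlM hI); exact: sVW.
split; first by move=> [_ h]; apply: (h (oner_neq0 _)); rewrite invr1; exact: sr1 (proj1 hW).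
move=> x y Vx Vy hxy; apply: NNPP => h.
have nx : ~ mx W x by move=> hx; apply: h; left.
have ny : ~ mx W y by move=> hy; apply: h; right.
have [x0 Wx'] := mx_notin (sVW _ Vx) nx.
have [y0 Wy'] := mx_notin (sVW _ Vy) ny.
case: hxy => _ hh; apply: hh; first by rewrite mulf_neq0.
rewrite invfM; exact: srM (proj1 hW) Wx' Wy'.
Qed.
End Val.

Lemma ext_ideal (K : fieldType) (G T V I : kset K) : ideal V I -> ksubset G I -> ksubset T V ->
  ksubset (ext G T) I.
Proof.
move=> hI sGI sTV x [l [hl ->]]; apply: (idl_sum hI) => p hp.
case: (hl p hp) => h1 h2; apply: (idlMr hI); [exact: sTV|exact: sGI].
Qed.

Section Tilde.
Variable K : fieldType.
Variables (D : kset K) (star : kset K -> kset K) (T V : kset K).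
Hypotheses (hD : is_subring D) (qf : quotient_field_of D) (ss : semistar D star)
  (hT : linked D star T) (hV : vring V) (sTV : ksubset T V).

Let hTs : is_subring T. Proof. by case: hT => [[]]. Qed.
Let sDT : ksubset D T. Proof. by case: hT => [[]]. Qed.
Let sDV : ksubset D V. Proof. by move=> x hx; apply: sTV; apply: sDT. Qed.
Let hmV : ideal V (mx V). Proof. exact: mx_ideal. Qed.

Definition Pc : kset K := fun x => mx V x /\ D x.

Lemma Pc_ideal : ideal D Pc.
Proof.
split; first by move=> x [].
split; first by split; [exact: idl0 hmV|exact: sr0].
split; first by move=> x y [h1 h2] [h3 h4]; split; [exact: (idlD hmV)|exact: srD].
by move=> r x Dr [h1 h2]; split; [apply: (idlM hmV) => //; exact: sDV|exact: srM].
Qed.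

Lemma noone G : fg_frac D G -> ksubset G Pc -> ~ star G 1.
Proof.
move=> fG sGP s1.
have sGD : ksubset G D by move=> x hx; case: (sGP x hx).
have e := star_eqD hD ss (fg_Fbar hD fG) sGD s1.
case: hT => _ hl; have e2 := hl G fG sGD e.
have T1 : ext G T 1 by apply/e2; exact: sr1.
have : mx V 1.
  apply: (ext_ideal hmV _ sTV T1) => x hx; by case: (sGP x hx).
by case=> _ h; apply: (h (oner_neq0 _)); rewrite invr1; exact: sr1 (proj1 hV).
Qed.

Lemma allV : ~ (exists a, Pc a /\ a != 0) -> forall z, V z.
Proof.
move=> h z; apply: NNPP => nz.
have z0 : z != 0 by apply/eqP => e; apply: nz; rewrite e; exact: sr0 (proj1 hV).
have Vi : V z^-1 by case: (proj2 hV z z0).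
have mi : mx V z^-1 by split => // _; rewrite invrK.
case: (qf z^-1) => a [b [Da [Db [b0 e]]]].
have ea : a = z^-1 * b by rewrite e divfK.
apply: h; exists a; split; last by rewrite ea mulf_neq0 ?invr_eq0.
split => //; rewrite ea mulrC.
apply: (idlM hmV) => //; exact: sDV.
Qed.

Section WithA.
Variable a : K.
Hypotheses (Pa : Pc a) (a0 : a != 0).

Definition Sq (N : kset K) := ideal D N /\ ksubset Pc N /\ ~ star_f D star N 1.

Lemma ideal_sm N : ideal D N -> is_submodule D N.
Proof. by case=> _ [h0 [h1 h2]]. Qed.

Lemma collect (C : kset K -> Prop) c0 (s : seq K) : C c0 -> is_chain (@ksubset K) C ->
  (forall x, x \in s -> exists N, C N /\ N x) -> exists N, C N /\ forall x, x \in s -> N x.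
Proof.
move=> Cc0 ch; elim: s => [|x s IH] H; first by exists c0.
case: (H x); first by rewrite inE eqxx.
move=> N1 [CN1 N1x].
case: IH => [y hy|N2 [CN2 hN2]]; first by apply: H; rewrite inE hy orbT.
case: (ch N1 N2 CN1 CN2) => h.
- exists N2; split => // y; rewrite inE => /orP [/eqP ->|hy]; [exact: h|exact: hN2].
- exists N1; split => // y; rewrite inE => /orP [/eqP ->|hy] //; exact: h (hN2 y hy).
Qed.

Lemma Sq_chains C : (forall x, C x -> Sq x) -> is_chain (@ksubset K) C ->
  exists u, Sq u /\ forall x, C x -> ksubset x u.
Proof.
move=> HS ch; case: (classic (exists c0, C c0)) => [[c0 Cc0]|nC]; last first.
  exists Pc; split; last by move=> x Cx; case: nC; exists x.
  split; first exact: Pc_ideal.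
  split => // [[G [fG [sGP s1]]]]; exact: noone fG sGP s1.
pose U : kset K := fun x => exists N, C N /\ N x.
exists U; split; last by move=> N CN x Nx; exists N.
have [[c0D [c00 _]] [c0P _]] := HS c0 Cc0.
split.
  split; first by move=> x [N [CN Nx]]; case: (HS N CN) => hI _; exact: idl_sub hI Nx.
  split; first by exists c0.
  split.
  - move=> x y [N1 [C1 h1]] [N2 [C2 h2]]; case: (ch N1 N2 C1 C2) => s.
    + exists N2; split => //; case: (HS N2 C2) => hI _; apply: (idlD hI) => //; exact: s.
    + exists N1; split => //; case: (HS N1 C1) => hI _; apply: (idlD hI) => //; exact: s.
  - move=> r x Dr [N [CN Nx]]; exists N; split => //; case: (HS N CN) => hI _; exact: (idlM hI).
split; first by move=> x hx; exists c0; split => //; exact: c0P.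
move=> [G [fG [sGU s1]]].
have [s [eG nz]] := fg_span fG.
case: (collect (C := C) (c0 := c0) (s := s) Cc0 ch).
  by move=> x hx; apply: sGU; rewrite eG; exact: span_mem.
move=> N [CN hN]; case: (HS N CN) => hI [_ hn]; apply: hn.
exists G; split => //; split => //; rewrite eG; apply: span_sub => //; exact: ideal_sm.
Qed.

Variable M : kset K.
Hypotheses (SM : Sq M) (Mmax : forall N, Sq N -> ksubset M N -> ksubset N M).

Let MI : ideal D M. Proof. by case: SM. Qed.
Let PM : ksubset Pc M. Proof. by case: SM => _ []. Qed.
Let Mn1 : ~ star_f D star M 1. Proof. by case: SM => _ []. Qed.
Let Ma : M a. Proof. exact: PM. Qed.

Lemma spa_Fbar l : Fbar D (Defs.span D (a :: l)).
Proof.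
split; first exact: span_sm.
by exists a; split => //; apply: (span_mem hD); rewrite inE eqxx.
Qed.

Lemma Mstar x : M x -> star_f D star M x.
Proof.
move=> Mx; exists (Defs.span D [:: a; x]); split; first by case: (spa_Fbar [:: x]) => _ h; exact: span_fg.
split.
  apply: span_sub => //; first exact: ideal_sm.
  by move=> z; rewrite !inE => /orP [/eqP ->|/eqP ->].
apply: (st_ext ss (spa_Fbar [:: x])); apply: (span_mem hD); by rewrite !inE eqxx orbT.
Qed.

Lemma M1n : ~ M 1.
Proof. by move=> h; apply: Mn1; exact: Mstar. Qed.

Lemma spa_mono l l' : (forall x, x \in l -> x \in l') ->
  ksubset (star (Defs.span D (a :: l))) (star (Defs.span D (a :: l'))).
Proof.
move=> h; apply: (st_mono ss (spa_Fbar l) (spa_Fbar l')).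
apply: span_sub => //; first exact: span_sm.
move=> x; rewrite inE => /orP [/eqP ->|hx]; apply: (span_mem hD); first by rewrite inE eqxx.
by rewrite inE (h x hx) orbT.
Qed.

Lemma Mquasi y : star_f D star M y -> D y -> M y.
Proof.
move=> [H [fH [sHM Hy]]] Dy.
have [h [eH nzH]] := fg_span fH.
pose N : kset K := fun z => exists mm d, M mm /\ D d /\ z = mm + y * d.
have MN : ksubset M N.
  by move=> z Mz; exists z, 0; do !split => //; [exact: sr0|by rewrite mulr0 addr0].
have NI : ideal D N.
  split; first by move=> z [mm [d [Mm [Dd ->]]]]; apply: srD => //; [exact: idl_sub MI Mm|exact: srM].
  split; first by apply: MN; exact: idl0 MI.
  split.
  - move=> z w [mm [d [Mm [Dd ->]]]] [mm' [d' [Mm' [Dd' ->]]]]; exists (mm + mm'), (d + d').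
    by do !split; [exact: (idlD MI)|exact: srD|rewrite mulrDr addrACA].
  - move=> r z Dr [mm [d [Mm [Dd ->]]]]; exists (r * mm), (r * d).
    by do !split; [exact: (idlM MI)|exact: srM|rewrite mulrDr mulrCA].
have Hsub l : ksubset (Defs.span D h) (Defs.span D (a :: l ++ h)).
  apply: span_sub => //; first exact: span_sm.
  by move=> x hx; apply: (span_mem hD); rewrite inE mem_cat hx !orbT.
have yin l : star (Defs.span D (a :: l ++ h)) y.
  apply: (st_mono ss (fg_Fbar hD fH) (spa_Fbar (l ++ h))) Hy; rewrite eH; exact: Hsub.
have build : forall s : seq K, (forall g, g \in s -> N g) -> exists t, (forall z, z \in t -> M z) /\
    forall g, g \in s -> star (Defs.span D (a :: t ++ h)) g.
  elim => [|g s IH] Hs; first by exists [::].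
  case: IH => [z hz|t [tM tS]]; first by apply: Hs; rewrite inE hz orbT.
  case: (Hs g); first by rewrite inE eqxx.
  move=> mm [d [Mm [Dd eg]]].
  exists (mm :: t); split.
    by move=> z; rewrite inE => /orP [/eqP ->|hz] //; exact: tM.
  have [[_ [sadd smul]] _] := st_Fbar ss (spa_Fbar ((mm :: t) ++ h)).
  move=> z; rewrite inE => /orP [/eqP ->|hz].
  - rewrite eg; apply: sadd.
    + apply: (st_ext ss (spa_Fbar _)); apply: (span_mem hD); by rewrite !inE eqxx orbT.
    + by rewrite mulrC; apply: smul => //; exact: yin.
  - apply: (spa_mono (l := t ++ h) (l' := (mm :: t) ++ h)) (tS z hz) => x hx; by rewrite /= inE hx orbT.
have NS : Sq N.
  split => //; split; first by move=> z hz; apply: MN; exact: PM.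
  move=> [G [fG [sGN s1]]].
  have [s [eG nzG]] := fg_span fG.
  case: (build s) => [g hg|t [tM tS]]; first by apply: sGN; rewrite eG; exact: span_mem.
  apply: Mn1; exists (Defs.span D (a :: t ++ h)); split; first by case: (spa_Fbar (t ++ h)) => _ hh; exact: span_fg.
  split.
    apply: span_sub => //; first exact: ideal_sm.
    move=> x; rewrite inE mem_cat => /orP [/eqP ->|/orP [hx|hx]] //; first exact: tM.
    by apply: sHM; rewrite eH; exact: span_mem.
  apply: (st_idem ss (spa_Fbar _)); apply: (st_mono ss (fg_Fbar hD fG) (st_Fbar ss (spa_Fbar _))) s1.
  rewrite eG; apply: span_sub => //; first by case: (st_Fbar ss (spa_Fbar (t ++ h))).
apply: (Mmax NS MN); exists 0, 1; do !split; [exact: idl0 MI|exact: sr1|by rewrite mulr1 add0r].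
Qed.

Lemma M_QMax : QMax D star M.
Proof.
have Fb : Fbar D M by split; [exact: ideal_sm|exists a].
split.
  split; first by split => //; move=> x hx; exact: idl_sub MI hx.
  move=> x; split; [move=> [h1 h2]; exact: Mquasi|move=> Mx; split; [exact: Mstar|exact: idl_sub MI Mx]].
split; first by exists 1; split; [exact: sr1|exact: M1n].
move=> N [[[NsmN _] sND] quasiN] [d [Dd nNd]] sMN; apply: Mmax => //.
split; first by case: NsmN => h0 [h1 h2].
split; first by move=> x hx; apply: sMN; exact: PM.
move=> h1; apply: nNd; have N1 : N 1 by apply/quasiN; split => //; exact: sr1.
by rewrite -[d]mulr1; case: NsmN => _ [_ h]; apply: h.
Qed.

Lemma loc_M_V : ksubset (localization D M) V.
Proof.
move=> x [d [s [Dd [Ds [nMs ->]]]]].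
have nP : ~ mx V s by move=> h; apply: nMs; apply: PM.
have [_ Vi] := mx_notin (sDV Ds) nP.
apply: srM (proj1 hV) (sDV Dd) Vi.
Qed.
End WithA.

Lemma tilde_prop F : fg_frac D F -> ksubset (star_tilde D star F) (ext F V).
Proof.
move=> fF x hx.
case: (classic (exists a, Pc a /\ a != 0)) => [[a [Pa a0]]|h]; last first.
  have [[_ [_ _]] [f [Ff f0]]] := fg_Fbar hD fF.
  rewrite -[x](mulVKf f0); apply: ext_single => //; exact: (allV h).
have refl : forall N : kset K, ksubset N N by move=> N z.
have trans : forall N1 N2 N3 : kset K, ksubset N1 N2 -> ksubset N2 N3 -> ksubset N1 N3.
  by move=> N1 N2 N3 h1 h2 z hz; apply: h2; apply: h1.
have [M [SM Mmax]] := zorn refl trans Sq_chains.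
have QM := M_QMax Pa a0 SM Mmax.
apply: (ext_mono2 (loc_M_V SM)); exact: hx M QM.
Qed.
End Tilde.

Local Open Scope ring_scope.

Ltac spl3 := split; [idtac|split].

Section Step.
Variable K : fieldType.
Variables (T U P P' : kset K).
Hypotheses (hT : is_subring T) (hU : vring U) (sTU : ksubset T U)
  (cU : forall x, T x -> (mx U x <-> P x)) (hP' : prime_ideal T P') (sPP : ksubset P P').

Let hUs : is_subring U. Proof. by case: hU. Qed.
Let mI : ideal U (mx U). Proof. exact: mx_ideal. Qed.
Let P'I : ideal T P'. Proof. exact: prime_ideal_ideal. Qed.
Let mT z : T z -> mx U z -> P' z. Proof. by move=> Tz mz; apply: sPP; apply/cU. Qed.

Definition Aa : kset K := fun x => exists t z, T t /\ mx U z /\ x = t + z.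
Definition Qa : kset K := fun x => exists p z, P' p /\ mx U z /\ x = p + z.

Lemma Aa_sr : is_subring Aa.
Proof.
split; first by exists 0, 0; spl3; [exact: sr0|exact: idl0 mI|by rewrite addr0].
split; first by exists 1, 0; spl3; [exact: sr1|exact: idl0 mI|by rewrite addr0].
split.
- move=> x y [t [z [Tt [mz ->]]]] [t' [z' [Tt' [mz' ->]]]]; exists (t - t'), (z - z').
  by spl3; [exact: srB|exact: (idlB hUs mI)|rewrite opprD addrACA].
- move=> x y [t [z [Tt [mz ->]]]] [t' [z' [Tt' [mz' ->]]]].
  exists (t * t'), (t * z' + (z * t' + z * z')); spl3; first exact: srM.
  + apply: (idlD mI); first by apply: (idlM mI) => //; exact: sTU.
    apply: (idlD mI); first by apply: (idlMr mI) => //; exact: sTU.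
    apply: (idlM mI) => //; exact: idl_sub mI mz.
  + by rewrite mulrDl !mulrDr !addrA.
Qed.

Lemma Qa_prime : prime_ideal Aa Qa.
Proof.
have P'0 : P' 0 by exact: idl0 P'I.
split; first by move=> x [p [z [Pp [mz ->]]]]; exists p, z; spl3; [exact: idl_sub P'I Pp|exact: mz|by []].
split; first by exists 0, 0; spl3; [exact: idl0 P'I|exact: idl0 mI|by rewrite addr0].
split.
  move=> x y [p [z [Pp [mz ->]]]] [p' [z' [Pp' [mz' ->]]]]; exists (p + p'), (z + z').
  by spl3; [exact: (idlD P'I)|exact: (idlD mI)|rewrite addrACA].
split.
  move=> r x [t [z [Tt [mz ->]]]] [p [z' [Pp [mz' ->]]]].
  exists (t * p), (t * z' + (z * p + z * z')); spl3; first exact: (idlM P'I).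
  + apply: (idlD mI); first by apply: (idlM mI) => //; exact: sTU.
    apply: (idlD mI); first by apply: (idlMr mI) => //; apply: sTU; exact: idl_sub P'I Pp.
    apply: (idlM mI) => //; exact: idl_sub mI mz.
  + by rewrite mulrDl !mulrDr !addrA.
split.
  move=> [p [z [Pp [mz e]]]].
  have ez : z = 1 - p by rewrite e addrC addKr.
  have Tz : T z by rewrite ez; apply: srB => //; [exact: sr1|exact: idl_sub P'I Pp].
  case: hP' => _ [_ [_ [_ [h _]]]]; apply: h; rewrite e; apply: (idlD P'I) => //; exact: mT.
move=> x y [t [z [Tt [mz ->]]]] [t' [z' [Tt' [mz' ->]]]] [p [w [Pp [mw e]]]].
have ew : t * t' - p = w - (t * z' + (z * t' + z * z')).
  have e2 : t * t' + (t * z' + (z * t' + z * z')) = p + w by rewrite -e mulrDl !mulrDr !addrA.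
  by rewrite -[t * t'](addrK (t * z' + (z * t' + z * z'))) e2 addrAC [p + w]addrC addrK.
have Tw : T (t * t' - p) by apply: srB; [exact: hT|exact: srM|exact: idl_sub P'I Pp].
have mw' : mx U (t * t' - p).
  rewrite ew; apply: (idlB hUs mI) => //.
  apply: (idlD mI); first by apply: (idlM mI) => //; exact: sTU.
  apply: (idlD mI); first by apply: (idlMr mI) => //; exact: sTU.
  apply: (idlM mI) => //; exact: idl_sub mI mz.
have Ptt : P' (t * t') by rewrite -[t * t'](subrK p); apply: (idlD P'I) => //; exact: mT.
case: hP' => _ [_ [_ [_ [_ h]]]]; case: (h t t' Tt Tt' Ptt) => hh; [left|right].
- by exists t, z.
- by exists t', z'.
Qed.

Lemma step : exists W, vring W /\ ksubset T W /\ ksubset W U /\ (forall x, T x -> (mx W x <-> P' x)).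
Proof.
have [W [hW [sAW cW]]] := chevalley Aa_sr Qa_prime.
have TA : ksubset T Aa by move=> t Tt; exists t, 0; spl3; [done|exact: idl0 mI|by rewrite addr0].
exists W; split => //; split; first by move=> t Tt; apply: sAW; exact: TA.
split.
- move=> x Wx; apply: NNPP => nU.
  have x0 : x != 0 by apply/eqP => e; apply: nU; rewrite e; exact: sr0.
  have Ui : U x^-1 by case: (proj2 hU x x0).
  have mi : mx U x^-1 by split => // _; rewrite invrK.
  have Ai : Aa x^-1 by exists 0, x^-1; spl3; [exact: sr0|done|by rewrite add0r].
  have Qi : Qa x^-1 by exists 0, x^-1; spl3; [exact: idl0 P'I|done|by rewrite add0r].
  have [_ h] := proj2 (cW _ Ai) Qi.
  by apply: h; [rewrite invr_eq0|rewrite invrK].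
- move=> x Tx; rewrite (cW x (TA x Tx)); split.
  + move=> [p [z [Pp [mz e]]]].
    have Tz : T z.
      have -> : z = x - p by rewrite e addrAC subrr add0r.
      by apply: srB => //; exact: idl_sub P'I Pp.
    rewrite e; apply: (idlD P'I) => //; exact: mT.
  + by move=> Px; exists x, 0; spl3; [done|exact: idl0 mI|by rewrite addr0].
Qed.
End Step.

Section Final.
Variable K : fieldType.

Lemma build_seq (T : kset K) (c : nat -> kset K) n : is_subring T ->
  (forall i, (i <= n)%N -> prime_ideal T (c i)) ->
  (forall i, (i < n)%N -> kstrict_subset (c i) (c i.+1)) ->
  forall k, (k <= n)%N -> exists u : nat -> kset K,
    (forall i, (i <= k)%N -> vring (u i) /\ ksubset T (u i) /\ forall x, T x -> (mx (u i) x <-> c i x)) /\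
    (forall i, (i < k)%N -> ksubset (u i.+1) (u i)).
Proof.
move=> hT hc hs; elim => [|k IH] hk.
- have [W [hW [sTW cW]]] := chevalley hT (hc 0%N hk).
  exists (fun _ => W); split => // i; rewrite leqn0 => /eqP ->; by split.
- have [u [hu hsub]] := IH (ltnW hk).
  have [hUk [sTU cU]] := hu k (leqnn k).
  have sPP : ksubset (c k) (c k.+1) by case: (hs k hk).
  have [W [hW [sTW [sWU cW]]]] := step hT hUk sTU cU (hc k.+1 hk) sPP.
  exists (fun i => if i == k.+1 then W else u i); split.
  + move=> i hi; case: eqP => [->|ne]; first by split.
    by apply: hu; move: hi; rewrite leq_eqVlt => /orP [/eqP e|]; [case: ne|].
  + move=> i hi; rewrite eqSS; case: eqP => [->|ne].
    * have nk : (k == k.+1) = false by rewrite eqn_leq ltnn andbF.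
      by rewrite nk.
    * have ik : (i < k)%N by move: hi; rewrite ltnS leq_eqVlt => /orP [/eqP e|] //.
      rewrite ifN; last by apply/eqP => e; move: ik; rewrite e ltnNge leqnSn.
      exact: hsub.
Qed.
End Final.

Local Close Scope ring_scope.
Theorem corollary4p3 (K : fieldType) (D : kset K) (star : kset K -> kset K) :
  domain_with_qf D -> semistar D star ->
  forall n : nat, tilde_dim_v_ge D star n <-> linked_dim_sup_ge D star n.
Proof.
move=> hDq ss n; have [hD qf] := hDq; split.
- move=> [V [tV dV]]; exists V; split => //; exact: tilde_linked hDq ss tV.
- move=> [T [hT [c [hc hs]]]].
  have hTs : is_subring T by case: hT => [[]].
  have sDT : ksubset D T by case: hT => [[]].
  have [u [hu hsub]] := build_seq hTs hc hs (leqnn n).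
  have [hV [sTV _]] := hu n (leqnn n).
  have sub : forall i, (i <= n)%N -> ksubset (u n) (u i).
    have gen : forall d i, (i + d <= n)%N -> ksubset (u (i + d)%N) (u i).
      elim => [|d IH] i hid x hx; first by move: hx; rewrite addn0.
      apply: IH; first by apply: ltnW; rewrite -addnS.
      apply: (hsub (i + d)%N); first by rewrite -addnS. by rewrite -addnS.
    move=> i hi; have := gen (n - i)%N i; rewrite subnKC //; apply; exact: leqnn.
  exists (u n); split.
  + split; last exact: (tilde_prop hD qf ss hT hV sTV).
    split; last by case: hV.
    by split; [case: hV|move=> x hx; apply: sTV; exact: sDT].
  + exists (fun i => mx (u i)); split.
    * move=> i hi; have [hUi _] := hu i hi; exact: mx_prime hV hUi (sub i hi).
    * move=> i hi; have [hUi [sTi cUi]] := hu i (ltnW hi).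
      have [hUi' [sTi' cUi']] := hu i.+1 hi.
      split; first exact: mx_sub hUi' (hsub i hi).
      case: (hs i hi) => _ [x [cx ncx]].
      have Tx : T x by case: (hc i.+1 hi) => h _; exact: h.
      exists x; split; first by apply/cUi'.
      by move/(cUi x Tx).
Qed.
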